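(* Let $q=p^h$ be a prime power and let $G$ be a finite group whose irreducible complex character degrees, with multiplicity, are $1$ ($q-1$ times), $q-1$ (once), and $q$ ($q-1$ times). Then the irreducible character degrees of the derived subgroup $G'$ are $1$ ($q$ times) and $q$ (once). Furthermore, $G''$ is abelian of order $q+1$. *)

(* Defs.v *)
From HB Require Import structures.
From mathcomp Require Import all_boot all_order all_algebra all_fingroup all_solvable all_field all_character.
Set Implicit Arguments. Unset Strict Implicit. Unset Printing Implicit Defensive.
Import GRing.Theory Num.Theory.
Local Open Scope ring_scope.

Definition irr_degrees (gT : finGroupType) (G : {group gT}) : seq algC :=
  [seq 'chi[G]_i 1%g | i : Iirr G].

(* Main.v *)
Require Import Defs.
From HB Require Import structures.
From mathcomp Require Import all_boot all_order all_algebra all_fingroup all_solvable all_field all_character.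
From mathcomp Require Import zify.
Set Implicit Arguments. Unset Strict Implicit. Unset Printing Implicit Defensive.
Import GRing.Theory Num.Theory.
Local Open Scope ring_scope.

Lemma count_degs (gT : finGroupType) (G : {group gT}) (x : algC) :
  count_mem x (irr_degrees G) = #|[pred i : Iirr G | 'chi[G]_i 1%g == x]|.
Proof.
rewrite /irr_degrees count_map cardE /enum_mem size_filter.
by rewrite count_filter; apply: eq_count => i; rewrite !inE /= ?andbT.
Qed.

Lemma mem_degs (gT : finGroupType) (G : {group gT}) (i : Iirr G) :
  'chi[G]_i 1%g \in irr_degrees G.
Proof. by apply: map_f; rewrite mem_enum. Qed.

Lemma perm_two (s : seq algC) a b na :
  a != b -> all (fun x => (x == a) || (x == b)) s ->
  count_mem a s = na -> count_mem b s = 1%N -> perm_eq s (nseq na a ++ [:: b]).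
Proof.
move=> nab /allP sab ca cb; apply/allP => x; rewrite mem_cat => xin.
have : (x == a) || (x == b).
  case/orP: xin => [/sab //|]; rewrite mem_cat mem_nseq inE.
  by case/orP=> [/andP[_ ->]|->]; rewrite ?orbT.
rewrite /= count_cat count_nseq /= addn0.
by case/orP=> /eqP ->; rewrite ?ca ?cb eqxx ?(negbTE nab) ?(eq_sym b) ?(negbTE nab) /= ?mul1n ?addn0 ?mul0n.
Qed.

Lemma sum_degs_sq (gT : finGroupType) (G : {group gT}) :
  \sum_(x <- irr_degrees G) x ^+ 2 = #|G|%:R.
Proof. by rewrite -irr_sum_square big_image. Qed.

Lemma sq_id q : (0 < q)%N -> (q - 1 + ((q - 1) ^ 2 + q ^ 2 * (q - 1)))%N = ((q - 1) * (q * q.+1))%N.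
Proof.
case: q => // r _; rewrite subSS subn0 !expnS expn0 !muln1.
rewrite !mulSn !mulnS !mulnDl !mulnDr; lia.
Qed.

Lemma q_dvd_mul q n : (0 < q)%N -> (q %| (q - 1) * n)%N -> (q %| n)%N.
Proof.
case: q => // r _; rewrite subSS subn0 Gauss_dvdr //.
exact: coprimeSn.
Qed.

Lemma nat_key q a b m : (2 <= q)%N -> (a < q)%N ->
  ((q - 1) * a = (q - 1) * b + q * m)%N -> a = b.
Proof.
move=> q2 aq e.
have ba : (b <= a)%N.
  rewrite -(@leq_pmul2l (q - 1)); last lia.
  by rewrite e leq_addr.
have {}e : ((q - 1) * (a - b) = q * m)%N.
  by apply/eqP; rewrite -(eqn_add2l ((q - 1) * b)) -mulnDr subnKC // e.
have : (q %| (q - 1) * (a - b))%N by rewrite e dvdn_mulr.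
move/q_dvd_mul => /(_ (ltnW q2)) d.
have : (a - b < q)%N by lia.
move: d; case E: (a - b)%N => [|d]; first by lia.
by move=> /(dvdn_leq (ltn0Sn d)); lia.
Qed.

Lemma two_id q : (0 < q)%N -> (q * q.+1 - (q - 1) * q.+2)%N = 2%N.
Proof.
case: q => // r _; rewrite subSS subn0 !mulSn !mulnS; lia.
Qed.

Lemma porbit_inv2 (T : finType) (s : {perm T}) u :
  (forall v, s (s v) = v) -> porbit s u = [set u; s u].
Proof.
move=> ss; apply/setP => y; rewrite !inE; apply/porbitP/idP.
  case=> i ->; rewrite permX; elim: i => [|i IH] /=; first by rewrite eqxx.
  by case/orP: IH => /eqP ->; rewrite ?ss eqxx ?orbT.
case/orP=> /eqP ->; first by exists 0%N; rewrite expg0 perm1.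
by exists 1%N; rewrite expg1.
Qed.

Lemma porbits_partition (T : finType) (s : {perm T}) :
  partition (porbits s) [set: T].
Proof.
apply/and3P; split.
- apply/eqP/setP => x; rewrite inE; apply/bigcupP; exists (porbit s x).
    by rewrite /porbits imset_f.
  exact: porbit_id.
- apply/trivIsetP => A B /imsetP[a _ ->] /imsetP[b _ ->] neq.
  apply/pred0P => y /=; apply/negP => /andP[ya yb]; move/negP: neq; apply.
  by apply/eqP; rewrite -(eqP (_ : porbit s y == porbit s a)) ?eq_porbit_mem //;
    apply/eqP; rewrite eq_porbit_mem.
- apply/imsetP => -[x _ /setP /(_ x)]; rewrite porbit_id inE //.
Qed.

Lemma der1_neq_2odd (gT : finGroupType) (N : {group gT}) m :
  #|N| = (2 * m)%N -> odd m -> N^`(1)%g != N.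
Proof.
move=> cN om.
have [z Nz oz] : {x | x \in N & #[x]%g = 2} by apply: Cauchy => //; rewrite cN dvdn_mulr.
pose sig (x : gT) : {perm [subg N]} := perm (@mulIg _ (subg N x)).
pose f x := odd_perm (sig x).
have sigM : {in N &, forall x y, sig (x * y)%g = (sig x * sig y)%g}.
  move=> x y Nx Ny; apply/permP => u; rewrite permM !permE subgM //.
  by rewrite mulgA.
have sig1 : sig 1%g = 1%g.
  apply/permP => u; rewrite perm1 permE; have -> : subg N 1 = 1%g.
    by apply: subg_inj; rewrite subgK ?group1.
  by rewrite mulg1.
have fM : {in N &, forall x y, f (x * y)%g = f x (+) f y}.
  by move=> x y Nx Ny; rewrite /f sigM // odd_permM.
have fV : {in N, forall x, f x^-1%g = f x}.
  move=> x Nx; have := fM x (x^-1)%g Nx (groupVr Nx).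
  rewrite mulgV {1}/f sig1 odd_perm1.
  by case: (f x) (f (x^-1)%g) => [] [].
have fder : {in N^`(1)%g, forall g, f g = false}.
  move=> g; rewrite derg1 /commutator => /gen_prodgP[n [c Hc ->]].
  have: (\prod_i c i)%g \in N /\ f (\prod_i c i)%g = false.
    apply: (big_ind (fun g => g \in N /\ f g = false)).
    - by rewrite group1 /f sig1 odd_perm1.
    - by move=> a b [Na fa] [Nb fb]; rewrite groupM // fM // fa fb.
    move=> i _; have /imset2P[a b Na Nb ->] := Hc i.
    have Nab : [~ a, b]%g \in N by rewrite groupR.
    split => //; rewrite /commg /conjg.
    have NbV : (b^-1)%g \in N by rewrite groupV.
    have NaV : (a^-1)%g \in N by rewrite groupV.
    rewrite fM ?groupM // fV // fM ?groupM // fM // fV //.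
    by case: (f a) (f b) => [] [].
  by case.
have z1 : (subg N z * subg N z)%g = 1%g.
  rewrite -subgM //; apply: subg_inj; rewrite subgK ?groupM //=.
  by rewrite -(expg_order z) oz.
have zn1 : subg N z != 1%g.
  apply/eqP => /(congr1 sgval); rewrite subgK //= => z1'.
  by move: oz; rewrite z1' order1.
have ss : forall v, sig z (sig z v) = v by move=> v; rewrite !permE -mulgA z1 mulg1.
have fz : f z = true.
  rewrite /f /odd_perm.
  have cT : #|[subg N]| = #|N| by rewrite card_sub; apply: eq_card.
  have hP : #|[set: [subg N]]| = (#|porbits (sig z)| * 2)%N.
    apply: card_uniform_partition (porbits_partition (sig z)).
    move=> A /imsetP[u _ ->]; rewrite porbit_inv2 // cards2 permE.
    apply/eqP; rewrite eqSS eqb1; apply/eqP => /(congr1 (mulg (u^-1)%g)).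
    by rewrite mulKg mulVg => /esym/eqP; rewrite (negbTE zn1).
  rewrite cardsT cT cN in hP.
  have -> : #|porbits (sig z)| = m by rewrite mulnC in hP; apply/eqP; rewrite -(eqn_pmul2r (isT : 0 < 2)%N) hP.
  by rewrite cT cN oddM /= om.
apply/eqP => dN; rewrite -dN in Nz; by rewrite fder in fz.
Qed.

Unset Implicit Arguments.

Theorem mainTheorem8 (gT : finGroupType) (G : {group gT}) (p h : nat)
  (hp : prime p) (hh : (0 < h)%N) (hq2 : (2 < p ^ h)%N)
  (hdeg : perm_eq (irr_degrees G)
            (nseq (p ^ h - 1) 1 ++ [:: (p ^ h - 1)%:R] ++ nseq (p ^ h - 1) (p ^ h)%:R)) :
  perm_eq (irr_degrees (G^`(1))%G) (nseq (p ^ h) 1 ++ [:: (p ^ h)%:R])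
  /\ abelian (G^`(2))%g /\ #|G^`(2)%g| = (p ^ h).+1.
Proof.
set q := (p ^ h)%N in hq2 hdeg *.
set N := (G^`(1))%G.
have nsNG : (N <| G)%g := der_normal 1 G.
have sNG : N \subset G := normal_sub nsNG.
have q1n1 : (q - 1)%:R != 1 :> algC by rewrite pnatr_eq1; apply/eqP; timeout 10 lia.
have qn1 : q%:R != 1 :> algC by rewrite pnatr_eq1; apply/eqP; timeout 10 lia.
have qq1 : q%:R != (q - 1)%:R :> algC by rewrite eqr_nat; apply/eqP; timeout 10 lia.
have degG (i : Iirr G) : [\/ 'chi[G]_i 1%g = 1, 'chi_i 1%g = (q - 1)%:R | 'chi_i 1%g = q%:R].
  have := mem_degs i; rewrite (perm_mem hdeg) !mem_cat !mem_nseq !inE.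
  by case/or3P => [/andP[_ /eqP]|/eqP|/andP[_ /eqP]]; [constructor 1|constructor 2|constructor 3].
have cnt x : #|[pred i : Iirr G | 'chi[G]_i 1%g == x]| = count_mem x (nseq (q - 1) 1 ++ [:: (q - 1)%:R] ++ nseq (q - 1) q%:R).
  rewrite -count_degs; have /seq.permP H := hdeg; exact: H.
have clin : #|[pred i : Iirr G | 'chi[G]_i 1%g == 1]| = (q - 1)%N.
  rewrite cnt !count_cat !count_nseq /= eqxx (negbTE q1n1) (negbTE qn1) /=.
  by rewrite mul1n mul0n !addn0.
have cq1 : #|[pred i : Iirr G | 'chi[G]_i 1%g == (q - 1)%:R]| = 1%N.
  rewrite cnt !count_cat !count_nseq /= eqxx eq_sym (negbTE q1n1) (negbTE qq1) /=.
  by rewrite !mul0n.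
have iGN : #|G : N|%g = (q - 1)%N.
  rewrite -card_lin_irr -clin; apply: eq_card => i; rewrite !inE qualifE /= irr_char.
  by [].
have cardG : #|G| = ((q - 1) * (q * q.+1))%N.
  apply/eqP; rewrite -(eqr_nat algC) -sum_degs_sq (perm_big _ hdeg) /=.
  rewrite !big_cat !big_nseq big_cons big_nseq !iter_addr_0 /= expr1n.
  rewrite -!natrX -mulrnA -!natrD eqr_nat sq_id //; timeout 10 lia.
have cardN : #|N| = (q * q.+1)%N.
  have := Lagrange sNG; rewrite iGN cardG mulnC => /eqP; rewrite eqn_pmul2l => [/eqP //|]; timeout 10 lia.
have [i0 def_i0] : exists i0 : Iirr G, [pred i : Iirr G | 'chi[G]_i 1%g == (q - 1)%:R] =i pred1 i0.
  by apply/card1P/eqP.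
have th1 : 'chi[G]_i0 1%g = (q - 1)%:R.
  by have := def_i0 i0; rewrite !inE eqxx => /eqP.
have uniq_i0 (i : Iirr G) : 'chi[G]_i 1%g = (q - 1)%:R -> i = i0.
  by move=> hi; have := def_i0 i; rewrite !inE hi eqxx => /esym/eqP.
have linRes (i : Iirr G) : 'chi[G]_i 1%g = 1 -> 'Res[N] 'chi_i = 1.
  move=> hi; have linI : 'chi[G]_i \is a linear_char by rewrite qualifE /= irr_char hi eqxx.
  have kerN := lin_char_der1 linI.
  apply/cfun_inP => x Nx; rewrite cfResE // cfun1E Nx.
  by rewrite cfker1 ?(subsetP kerN) // hi.
have ResReg (k : Iirr N) : '['Res[N] (cfReg G), 'chi_k] = (q - 1)%:R * 'chi_k 1%g.
  have -> : 'Res[N] (cfReg G) = (q - 1)%:R *: cfReg N.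
    apply/cfun_inP => x Nx; rewrite cfResE // cfRegE cfunE cfRegE.
    case: (x == 1%g); last by rewrite !mulr0n mulr0.
    by rewrite !mulr1n -iGN -natrM mulnC Lagrange.
  rewrite cfdotZl cfReg_sum cfdot_suml (bigD1 k) //= cfdotZl cfdot_irr eqxx mulr1.
  by rewrite big1 ?addr0 // => i ne; rewrite cfdotZl cfdot_irr (negbTE ne) mulr0.
have ResRegSum (k : Iirr N) : '['Res[N] (cfReg G), 'chi_k] = \sum_i 'chi[G]_i 1%g * '['Res[N] 'chi_i, 'chi_k].
  rewrite cfReg_sum linear_sum cfdot_suml; apply: eq_bigr => i _.
  by rewrite linearZ cfdotZl.
have [j0 hj0] := constt_cfRes_irr N i0.
pose e := '['Res[N] 'chi[G]_i0, 'chi_j0].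
have hCl := Clifford_Res_sum_cfclass nsNG hj0.
rewrite (reindex_cfclass _ (fun x => x) _ nsNG) /= in hCl.
pose O := fun k : Iirr N => 'chi_k \in ('chi_j0 ^: G)%CF.
have dotO (k : Iirr N) : '['Res[N] 'chi[G]_i0, 'chi_k] = e * (O k)%:R.
  rewrite {1}hCl cfdotZl cfdot_suml; congr (_ * _).
  case Ok: (O k).
    rewrite (bigD1 k) //= cfdot_irr eqxx big1 ?addr0 // => l /andP[_ ne].
    by rewrite cfdot_irr (negbTE ne).
  by rewrite big1 // => l Ol; rewrite cfdot_irr; case: eqP => // el; move: Ok; rewrite /O -el Ol.
have degO (k : Iirr N) : O k -> 'chi_k 1%g = 'chi_j0 1%g.
  by case/cfclassP => y Gy ->; rewrite cfConjg1.
pose t := #|[pred k : Iirr N | O k]|.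
have th1' : (q - 1)%:R = e * (t%:R * 'chi_j0 1%g).
  rewrite -th1 -(cfRes1 N) {1}hCl cfunE sum_cfunE; congr (_ * _).
  rewrite (eq_bigr (fun _ => 'chi_j0 1%g)); last by move=> k; apply: degO.
  by rewrite -[LHS]/(\sum_(i in [pred k | O k]) 'chi_j0 1%g) sumr_const mulr_natl.
have nz0 : 0 \notin irr_constt ('Res[N] 'chi[G]_i0).
  apply/negP => /(constt0_Res_cfker nsNG); rewrite -lin_irr_der1 => lin.
  by move: q1n1; rewrite -th1 lin_char1 ?eqxx.
have j0n0 : j0 != 0 by apply: contraNneq nz0 => <-.
have e0 : e != 0 by rewrite -irr_consttE.
have O0 : ~~ O 0.
  by apply/negP => O0; move: nz0; rewrite irr_consttE dotO O0 mulr1 e0.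
have Oj0 : O j0 := cfclass_refl _ _.
have Nat_dot (i : Iirr G) (k : Iirr N) : '['Res[N] 'chi_i, 'chi_k] \in Num.nat.
  by rewrite Cnat_cfdot_char_irr // cfRes_char ?irr_char.
have mainEq (k : Iirr N) : k != 0 -> exists m : nat,
    (q - 1)%:R * 'chi_k 1%g = (q - 1)%:R * (e * (O k)%:R) + q%:R * m%:R.
  move=> nk; rewrite -ResReg ResRegSum (bigD1 i0) //= th1 dotO.
  have -> : \sum_(i | i != i0) 'chi[G]_i 1%g * '['Res[N] 'chi_i, 'chi_k]
          = q%:R * \sum_(i | i != i0) '['Res[N] 'chi_i, 'chi_k].
    rewrite mulr_sumr; apply: eq_bigr => i ni.
    case: (degG i) => [h1|h2|h3]; last by rewrite h3.
    - by rewrite linRes // -(irr0 N) cfdot_irr eq_sym (negbTE nk) !mulr0.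
    - by rewrite (uniq_i0 _ h2) eqxx in ni.
  have /natrP[m ->] : \sum_(i | i != i0) '['Res[N] 'chi[G]_i, 'chi_k] \in Num.nat.
    by apply: rpred_sum => i _.
  by exists m.
have /natrP[E eE] : e \in Num.nat by apply: Nat_dot.
have /natrP[F fE] := Cnat_irr1 j0.
have E0 : (0 < E)%N by rewrite lt0n; apply: contraNneq e0 => E0; rewrite eE E0.
have t0 : (0 < t)%N by apply/card_gt0P; exists j0.
have tq : (q - 1 = E * (t * F))%N.
  by apply/eqP; rewrite -(eqr_nat algC) th1' eE fE !natrM.
have FE : F = E.
  have [m hm] := mainEq j0 j0n0.
  rewrite Oj0 /= mulr1n mulr1 fE eE -!natrM -natrD in hm.
  have : (F <= E * (t * F))%N by rewrite mulnA leq_pmull // muln_gt0 E0 t0.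
  move=> FtF; apply: (@nat_key q F E m).
  - exact: ltnW.
  - by apply: (leq_ltn_trans FtF); rewrite -tq; move: hq2; clear; timeout 10 lia.
  - by apply/eqP; rewrite -(eqr_nat algC) hm.
have degR (k : Iirr N) : k != 0 -> ~~ O k -> exists c, 'chi_k 1%g = (q * c.+1)%:R.
  move=> nk nOk; have [m hm] := mainEq k nk.
  rewrite (negbTE nOk) /= mulr0n mulr0 mulr0 add0r in hm.
  have /natrP[n nE] := Cnat_irr1 k.
  rewrite nE -!natrM in hm; move/eqP: hm; rewrite eqr_nat => /eqP hm.
  have : (q %| (q - 1) * n)%N by rewrite hm dvdn_mulr.
  move/q_dvd_mul => /(_ (ltnW (ltnW hq2))) /dvdnP[c cE].
  case: c cE => [|c] cE.
    by have := irr1_gt0 k; rewrite nE cE mul0n Order.POrderTheory.ltxx.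
  by exists c; rewrite nE cE mulnC.
pose dg (k : Iirr N) := Num.truncn ('chi[N]_k 1%g).
have dgE (k : Iirr N) : 'chi_k 1%g = (dg k)%:R by rewrite truncnK // Cnat_irr1.
have sumN : (\sum_k dg k ^ 2)%N = #|N|.
  apply/eqP; rewrite -(eqr_nat algC) -irr_sum_square natr_sum; apply/eqP/eq_bigr => k _.
  by rewrite natrX dgE.
have dg0 : dg 0 = 1%N by apply/eqP; rewrite -(eqr_nat algC) -dgE irr0 cfun11.
have dgO (k : Iirr N) : O k -> dg k = F.
  by move=> Ok; apply/eqP; rewrite -(eqr_nat algC) -dgE -fE degO.
pose R := [pred k : Iirr N | (k != 0) && ~~ O k].
have sumR : (\sum_(k in R) dg k ^ 2)%N = (q * q)%N.
  move: sumN; rewrite (bigD1 0) //= dg0 (bigID O) /=.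
  rewrite (eq_bigl (fun k => k \in [pred k | O k])); last first.
    by move=> k; rewrite !inE andbC; case Ok: (O k) => //=; apply: contraNneq O0 => <-.
  rewrite (eq_bigr (fun _ => F ^ 2)%N); last by move=> k; rewrite inE => /dgO ->.
  rewrite sum_nat_const cardN -/t.
  have -> : (t * F ^ 2 = q - 1)%N by rewrite tq FE expnS expn1 mulnCA.
  move=> hs; rewrite (eq_bigl (fun i => (i != 0) && ~~ O i)) //.
  move: hs; rewrite mulnS; move: (\sum_(i | _) _)%N (q * q)%N => S qq.
  by move: hq2; clear; timeout 10 lia.
have q0 : (0 < q)%N by apply: ltnW (ltnW hq2).
have Rq (k : Iirr N) : R k -> dg k = (q * (dg k %/ q))%N /\ (0 < dg k %/ q)%N.
  rewrite /R /= => /andP[nk nOk]; have [c cE] := degR k nk nOk.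
  have -> : dg k = (q * c.+1)%N by apply/eqP; rewrite -(eqr_nat algC) -dgE cE.
  by rewrite mulKn.
have sumc : (\sum_(k in R) (dg k %/ q) ^ 2)%N = 1%N.
  have : (q * q * \sum_(k in R) (dg k %/ q) ^ 2 = q * q * 1)%N.
    rewrite muln1 -[RHS]sumR big_distrr /=; apply/eq_bigr => k Rk.
    by have [Dk _] := Rq k Rk; rewrite {2}Dk expnMn mulnn.
  by move/eqP; rewrite eqn_pmul2l ?muln_gt0 ?q0 // => /eqP.
have cR : #|R| = 1%N.
  apply/eqP; rewrite eqn_leq; apply/andP; split.
    rewrite -sumc -sum1_card leq_sum // => k Rk; have [_ c0] := Rq k Rk.
    by rewrite expn_gt0 c0.
  rewrite lt0n; apply/eqP => R0; move: sumc; rewrite big_pred0 //.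
  by move=> k; rewrite (card0_eq R0).
have [k1 hk1] : exists k1, R =i pred1 k1 by apply/card1P/eqP.
have Rk1 : k1 \in R by rewrite hk1 inE.
have dk1 : dg k1 = q.
  move: sumc; rewrite (big_pred1 k1 hk1) => h1; have : ((dg k1 %/ q) ^ 2 == 1 ^ 2)%N by rewrite h1.
  rewrite eqn_sqr => /eqP c1.
  by have [-> _] := Rq k1 Rk1; rewrite c1 muln1.
have F0 : (0 < F)%N.
  by move: tq hq2; case: (F) => // ; rewrite !muln0; clear; timeout 10 lia.
have FdvdN : (F %| q * q.+1)%N by rewrite -cardN -dvdC_nat; have := dvd_irr1_cardG j0; rewrite fE.
have Fdvdq1 : (F %| q - 1)%N by rewrite tq dvdn_mull // dvdn_mull.
have F2 : (F %| 2)%N by rewrite -(two_id q0) dvdn_sub // dvdn_mulr.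
have F12 : F = 1%N \/ F = 2%N.
  by have := dvdn_leq (isT : (0 < 2)%N) F2; move: F0; clear; timeout 10 lia.
have qn1' : q != 1%N by apply/eqP => q1; move: hq2; rewrite q1.
have F1 : F = 1%N.
  case: F12 => // F2e; exfalso.
  have lin1 : #|[pred k : Iirr N | 'chi[N]_k \is a linear_char]| = 1%N.
    apply/eqP/card1P; exists 0 => k; rewrite !inE qualifE /= irr_char /= dgE pnatr_eq1.
    case: (eqVneq k 0) => [-> | nk]; first by rewrite dg0 eqxx.
    case Ok: (O k); first by rewrite dgO // F2e.
    have : k \in R by rewrite inE /= nk Ok.
    by rewrite hk1 inE => /eqP ->; rewrite dk1; apply/negbTE.
  rewrite card_lin_irr in lin1.
  have sNN' : N \subset N^`(1)%g by rewrite -indexg_eq1 lin1.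
  have qE : q = (4 * t).+1 by move: tq; rewrite -FE F2e; move: hq2; clear; timeout 10 lia.
  have hc : #|N| = (2 * ((4 * t).+1 * (2 * t).+1))%N.
    rewrite cardN qE mulnCA; congr (_ * _)%N; clear; timeout 10 lia.
  have ho : odd ((4 * t).+1 * (2 * t).+1) by rewrite oddM /= !oddM.
  have := der1_neq_2odd hc ho.
  by rewrite eqEsubset der_sub sNN'.
have t1 : t = (q - 1)%N by rewrite tq -FE F1 mul1n muln1.
have lin_iff (k : Iirr N) : (dg k == 1%N) = (k == 0) || O k.
  case: (eqVneq k 0) => [->|nk] /=; first by rewrite dg0 eqxx.
  case Ok: (O k); first by rewrite dgO // F1 eqxx.
  have : k \in R by rewrite inE /= nk Ok.
  by rewrite hk1 inE => /eqP ->; rewrite dk1; apply/negbTE.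
have q_iff (k : Iirr N) : (dg k == q) = (k == k1).
  case: (eqVneq k k1) => [->|nk1]; first by rewrite dk1 eqxx.
  apply/negbTE; have : k \notin R by rewrite hk1 inE.
  rewrite inE /= negb_and negbK => /orP[/eqP->|Ok].
    by rewrite dg0 eq_sym.
  by rewrite negbK in Ok; rewrite dgO // F1 eq_sym.
have lin_card : #|[pred k : Iirr N | 'chi[N]_k 1%g == 1]| = q.
  rewrite (eq_card (B := [predU1 0 & [pred k | O k]])).
    rewrite cardU1 inE /= O0 -/t t1; move: q0; clear; timeout 10 lia.
  by move=> k; rewrite !inE dgE pnatr_eq1 lin_iff.
have permN : perm_eq (irr_degrees N) (nseq q 1 ++ [:: q%:R]).
  apply: perm_two.
  - by rewrite eq_sym.
  - apply/allP => x /mapP[k _ ->]; rewrite dgE pnatr_eq1 eqr_nat lin_iff q_iff.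
    case: (eqVneq k 0) => //= nk; case Ok: (O k) => //=.
    have : k \in R by rewrite inE /= nk Ok.
    by rewrite hk1 inE => ->.
  - by rewrite count_degs lin_card.
  - rewrite count_degs; apply/eqP/card1P; exists k1 => k.
    by rewrite !inE dgE eqr_nat q_iff.
have linN : #|N : N^`(1)|%g = q.
  rewrite -card_lin_irr -lin_card; apply: eq_card => k.
  by rewrite !inE qualifE /= irr_char.
have cardN' : #|N^`(1)%g| = q.+1.
  have := Lagrange (der_sub 1 N); rewrite linN cardN mulnC => /eqP.
  by rewrite eqn_pmul2l // => /eqP.
have abN' : abelian N^`(1)%g.
  apply/char_abelianP => phi; rewrite qualifE /= irr_char /=.
  have [k hk] := constt_cfInd_irr phi (der_sub 1 N).
  rewrite constt_Ind_Res in hk.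
  have [n hn] := dvdn_constt_Res1_irr1 (der_normal 1 N) hk.
  have /natrP[d dE] := Cnat_irr1 phi.
  have dN' : (d %| q.+1)%N by rewrite -cardN' -dvdC_nat; have := dvd_irr1_cardG phi; rewrite dE.
  rewrite dE pnatr_eq1.
  have hkd : dg k = (n * d)%N by apply/eqP; rewrite -(eqr_nat algC) -dgE hn dE natrM.
  have : (dg k == 1%N) || (dg k == q).
    rewrite lin_iff q_iff; case: (eqVneq k 0) => //= nk; case Ok: (O k) => //=.
    have : k \in R by rewrite inE /= nk Ok.
    by rewrite hk1 inE => ->.
  case/orP => /eqP; rewrite hkd.
    by move/eqP; rewrite muln_eq1 => /andP[_].
  move=> ndq; have dq : (d %| q)%N by rewrite -ndq dvdn_mull.
  have : (d %| q.+1 - q)%N by rewrite dvdn_sub.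
  by rewrite subSnn dvdn1.
split; first exact: permN.
by split.
Qed.
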